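(* Let $K$ be a field containing $\mathbb{Q}$ such that every element of $K$ is algebraic over $\mathbb{Q}$. Then $\widetilde{K}=\{x\in K: \sigma(x)=x \text{ for every field automorphism } \sigma \text{ of } K\}$.
   Context: Let $K$ be a field. For $r\in K$, a finite set $A(r)$ with $\{r\}\subseteq A(r)\subseteq K$ is called adequate for $r$ if every mapping $f:A(r)\to K$ satisfying (1) if $1\in A(r)$ then $f(1)=1$; (2) if $a,b\in A(r)$ and $a+b\in A(r)$ then $f(a+b)=f(a)+f(b)$; (3) if $a,b\in A(r)$ and $a\cdot b\in A(r)$ then $f(a\cdot b)=f(a)\cdot f(b)$, also satisfies $f(r)=r$. $\widetilde{K}$ denotes the set of all $r\in K$ for which some finite set adequate for $r$ exists. *)

(* Defs.v *)
From HB Require Import structures.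
From mathcomp Require Import all_boot all_order all_algebra.
Set Implicit Arguments. Unset Strict Implicit. Unset Printing Implicit Defensive.
Import Order.TTheory GRing.Theory Num.Theory.
Local Open Scope ring_scope.

(* A finite set A ⊆ K is represented by a finite list (duplicates irrelevant).
   A mapping f : A -> K is represented by a total function K -> K whose
   values outside A are irrelevant (every map on A extends to K). *)
Definition adequate (K : fieldType) (r : K) (A : seq K) : Prop :=
  r \in A /\
  forall f : K -> K,
    ((1 : K) \in A -> f 1 = 1) ->
    (forall a b, a \in A -> b \in A -> a + b \in A -> f (a + b) = f a + f b) ->
    (forall a b, a \in A -> b \in A -> a * b \in A -> f (a * b) = f a * f b) ->
    f r = r.

Definition Ktilde (K : fieldType) (r : K) : Prop :=
  exists A : seq K, adequate r A.

Definition algebraic_over_Q (K : fieldType) (x : K) : Prop :=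
  exists2 p : {poly rat}, p != 0 & root (map_poly (@ratr K) p) x.

(* Main.v *)
Require Import Defs.
From HB Require Import structures.
From mathcomp Require Import all_boot all_order all_algebra.
From Stdlib Require Import Classical ClassicalEpsilon.
Set Implicit Arguments. Unset Strict Implicit. Unset Printing Implicit Defensive.
Import Order.TTheory GRing.Theory Num.Theory.

Lemma pig (T : eqType) (P : nat -> Prop) (h : nat -> T) (R : seq T) :
  (forall m, exists n, (m <= n)%N /\ P n /\ h n \in R) ->
  exists y, forall m, exists n, (m <= n)%N /\ P n /\ h n = y.
Proof.
elim: R => [|y R IH] H.
  by have [n [_ [_]]] := H 0%N.
have [Hy|Hy] := classic (forall m, exists n, (m <= n)%N /\ P n /\ h n = y).
  by exists y.
have [m0 Hm0] := not_all_ex_not _ _ Hy.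
apply: IH => m; have [n [le [Pn hn]]] := H (maxn m m0).
exists n; split; first exact: leq_trans (leq_maxl _ _) le.
split=> //; move: hn; rewrite inE => /orP[/eqP hn|//].
case: Hm0; exists n; split=> //; exact: leq_trans (leq_maxr _ _) le.
Qed.

Section Konig.
Variables (T : eqType) (x0 : T) (F : nat -> nat -> T) (R : nat -> seq T).
Hypothesis HR : forall i n, (i <= n)%N -> F n i \in R i.

Definition Q N (h : seq T) := size h = N /\
  forall m, exists n, (m <= n)%N /\ forall i, (i < N)%N -> F n i = nth x0 h i.

Lemma Q0 : Q 0 [::].
Proof. by split=> // m; exists m. Qed.

Lemma Qext N h : Q N h -> exists y, Q N.+1 (rcons h y).
Proof.
case=> sz H.
have := @pig T (fun n => forall i, (i < N)%N -> F n i = nth x0 h i) (F ^~ N) (R N).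
case.
  move=> m; have [n [le Hn]] := H (maxn m N); exists n; split.
    exact: leq_trans (leq_maxl _ _) le.
  split=> //; apply: HR; exact: leq_trans (leq_maxr _ _) le.
move=> y Hy; exists y; split; first by rewrite size_rcons sz.
move=> m; have [n [le [Pn hn]]] := Hy m; exists n; split=> // i lt.
rewrite nth_rcons sz; move: lt; rewrite ltnS leq_eqVlt => /orP[/eqP->|lt]; first by rewrite ltnn eqxx.
by rewrite lt Pn.
Qed.

Fixpoint G N : {h | Q N h} := match N with
  | 0 => exist _ [::] Q0
  | N'.+1 => let y := proj1_sig (constructive_indefinite_description _ (Qext (proj2_sig (G N')))) in
     exist _ (rcons (proj1_sig (G N')) y)
       (proj2_sig (constructive_indefinite_description _ (Qext (proj2_sig (G N')))))
  end.

Definition g i := nth x0 (proj1_sig (G i.+1)) i.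

Lemma G_stable i N : (i < N)%N -> nth x0 (proj1_sig (G N)) i = g i.
Proof.
elim: N => // N IH; rewrite ltnS leq_eqVlt => /orP[/eqP->//|lt].
rewrite /= nth_rcons.
have [sz _] := proj2_sig (G N); rewrite sz lt; exact: IH.
Qed.

Lemma konig N m : exists n, (m <= n)%N /\ forall i, (i <= N)%N -> F n i = g i.
Proof.
have [_ H] := proj2_sig (G N.+1); have [n [le Hn]] := H m.
by exists n; split=> // i le'; rewrite Hn // G_stable.
Qed.
End Konig.

Local Open Scope ring_scope.

Inductive term := T0 | T1 | TV | TAdd of term & term | TMul of term & term
  | TNeg of term | TInv of term.

Section Terms.
Variable K : fieldType.

Fixpoint ev (v : K) t : K := match t with
  | T0 => 0 | T1 => 1 | TV => v
  | TAdd a b => ev v a + ev v b | TMul a b => ev v a * ev v b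
  | TNeg a => - ev v a | TInv a => (ev v a)^-1 end.

Fixpoint sv (v : K) t : seq K := ev v t :: match t with
  | TAdd a b | TMul a b => sv v a ++ sv v b
  | TNeg a | TInv a => sv v a | _ => [::] end.

Definition tr v t := 0 :: 1 :: sv v t.

Definition good (f : K -> K) (A : seq K) :=
  [/\ ((1 : K) \in A -> f 1 = 1),
   (forall a b, a \in A -> b \in A -> a + b \in A -> f (a + b) = f a + f b) &
   (forall a b, a \in A -> b \in A -> a * b \in A -> f (a * b) = f a * f b)].

Lemma good_f0 f A : good f A -> 0 \in A -> f 0 = 0.
Proof.
case=> _ hA _ h0; have := hA 0 0 h0 h0; rewrite addr0 => /(_ h0) E.
by apply: (@addrI _ (f 0)); rewrite -E addr0.
Qed.

Lemma sv_head v t : ev v t \in sv v t.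
Proof. by case: t => *; rewrite inE eqxx. Qed.

Lemma ev_good f A v t : good f A -> {subset tr v t <= A} -> f (ev v t) = ev (f v) t.
Proof.
move=> g; have [g1 gA gM] := g.
elim: t => [||| a IHa b IHb | a IHa b IHb | a IHa | a IHa] /= sub.
- by apply: good_f0 g _; apply: sub; rewrite inE eqxx.
- by apply: g1; apply: sub; rewrite /tr !inE eqxx !orbT.
- by [].
- have sa : {subset tr v a <= A}.
    by move=> y; rewrite !inE => /or3P[/eqP->|/eqP->|h]; apply: sub;
      rewrite !inE ?eqxx ?orbT // mem_cat h ?orbT.
  have sb : {subset tr v b <= A}.
    by move=> y; rewrite !inE => /or3P[/eqP->|/eqP->|h]; apply: sub;
      rewrite !inE ?eqxx ?orbT // mem_cat h ?orbT.
  rewrite gA ?IHa ?IHb //; [apply: sa | apply: sb | apply: sub];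
    by rewrite ?inE ?sv_head ?eqxx ?orbT.
- have sa : {subset tr v a <= A}.
    by move=> y; rewrite !inE => /or3P[/eqP->|/eqP->|h]; apply: sub;
      rewrite !inE ?eqxx ?orbT // mem_cat h ?orbT.
  have sb : {subset tr v b <= A}.
    by move=> y; rewrite !inE => /or3P[/eqP->|/eqP->|h]; apply: sub;
      rewrite !inE ?eqxx ?orbT // mem_cat h ?orbT.
  rewrite gM ?IHa ?IHb //; [apply: sa | apply: sb | apply: sub];
    by rewrite ?inE ?sv_head ?eqxx ?orbT.
- have sa : {subset tr v a <= A}.
    by move=> y; rewrite !inE => /or3P[/eqP->|/eqP->|h]; apply: sub;
      rewrite !inE ?eqxx ?orbT // h ?orbT.
  have h0 : 0 \in A by apply: sub; rewrite inE eqxx.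
  have hw : - ev v a \in A by apply: sub; rewrite !inE eqxx !orbT.
  have hu : ev v a \in A by apply: sa; rewrite !inE sv_head !orbT.
  have := gA _ _ hw hu; rewrite addNr (good_f0 g h0) => /(_ h0) E.
  by rewrite -IHa //; apply/eqP; rewrite -subr_eq0 opprK -E.
- have sa : {subset tr v a <= A}.
    by move=> y; rewrite !inE => /or3P[/eqP->|/eqP->|h]; apply: sub;
      rewrite !inE ?eqxx ?orbT // h ?orbT.
  have h0 : 0 \in A by apply: sub; rewrite inE eqxx.
  have h1 : 1 \in A by apply: sub; rewrite !inE eqxx orbT.
  have hw : (ev v a)^-1 \in A by apply: sub; rewrite !inE eqxx !orbT.
  have hu : ev v a \in A by apply: sa; rewrite !inE sv_head !orbT.
  rewrite -IHa //.
  have [->|nz] := eqVneq (ev v a) 0.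
    by rewrite invr0 (good_f0 g h0) invr0.
  have := gM _ _ hw hu; rewrite mulVf // (g1 h1) => /(_ h1) E.
  have nzf : f (ev v a) != 0 by apply/eqP=> z; move: E; rewrite z mulr0; apply/eqP; exact: oner_neq0.
  by apply: (mulIf nzf); rewrite -E mulVf.
Qed.

Definition natt n := iter n (fun t => TAdd t T1) T0.
Definition intt (z : int) := match z with Posz n => natt n | Negz n => TNeg (natt n.+1) end.
Definition ratt (q : rat) := TMul (intt (numq q)) (TInv (intt (denq q))).
Fixpoint hornt (s : seq rat) := match s with
  | [::] => T0 | c :: s' => TAdd (TMul (hornt s') TV) (ratt c) end.

Lemma ev_natt v n : ev v (natt n) = n%:R.
Proof. by elim: n => //= n IH; rewrite IH mulrSr. Qed.

Lemma ev_intt v z : ev v (intt z) = z%:~R.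
Proof. case: z => n /=; rewrite ev_natt // NegzE rmorphN /= -mulrSr //. Qed.

Lemma ev_ratt v q : ev v (ratt q) = ratr q.
Proof. by rewrite /= !ev_intt. Qed.

Lemma ev_hornt v s : ev v (hornt s) = horner_rec (map ratr s) v.
Proof. by elim: s => //= c s IH; rewrite IH !ev_intt. Qed.

Lemma ev_poly v (p : {poly rat}) : ev v (hornt p) = (map_poly (@ratr K) p).[v].
Proof. by rewrite map_polyE horner_Poly ev_hornt. Qed.

Lemma root_good f A a (p : {poly rat}) :
  root (map_poly (@ratr K) p) a -> good f A -> {subset tr a (hornt p) <= A} ->
  root (map_poly (@ratr K) p) (f a).
Proof.
move=> /eqP r g sub; apply/eqP; rewrite -ev_poly -(ev_good g sub) ev_poly r.
by apply: good_f0 g _; apply: sub; rewrite inE eqxx.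
Qed.

End Terms.

Lemma roots_fin (K : fieldType) (p : {poly K}) : p != 0 ->
  exists s : seq K, forall a, root p a -> a \in s.
Proof.
move: {2}(size p) (leqnn (size p)) => n; elim: n p => [|n IH] p.
  by rewrite leqn0 size_poly_eq0 => /eqP->; rewrite eqxx.
move=> sz nz.
have [[a ra]|nr] := classic (exists a, root p a); last first.
  by exists [::] => a ra; case: nr; exists a.
have [q pq] := factor_theorem _ _ ra.
have nzq : q != 0 by apply: contraNneq nz => q0; rewrite pq q0 mul0r.
have szq : (size q <= n)%N.
  move: sz; rewrite pq size_mul ?polyXsubC_eq0 // size_XsubC addn2 /=.
  by rewrite ltnS.
have [s Hs] := IH q szq nzq.
exists (a :: s) => b; rewrite pq rootM root_XsubC inE => /orP[/Hs->|->//].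
by rewrite orbT.
Qed.

Section Char0.
Variable K : fieldType.
Hypothesis charK0 : [pchar K] =i pred0.

Lemma intr_eq0K (z : int) : (z%:~R == 0 :> K) = (z == 0).
Proof.
case: z => n; first by rewrite /= ((pcharf0P K).1 charK0).
by rewrite NegzE rmorphN /= oppr_eq0 ((pcharf0P K).1 charK0).
Qed.

Lemma ratr_eq0K (q : rat) : (ratr q == 0 :> K) = (q == 0).
Proof.
rewrite /ratr mulf_eq0 invr_eq0 !intr_eq0K denq_eq0 orbF numq_eq0 //.
Qed.

Lemma map_ratr_neq0 (p : {poly rat}) : p != 0 -> map_poly (@ratr K) p != 0.
Proof.
move=> nz; apply/negP => /eqP E.
have := congr1 (fun r : {poly K} => r`_(size p).-1) E.
rewrite /= coef_map_id0; last by apply/eqP; rewrite ratr_eq0K.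
rewrite coef0 => /eqP; rewrite ratr_eq0K; apply/negP.
by rewrite -lead_coefE lead_coef_eq0.
Qed.
Hypothesis algK : forall x : K, algebraic_over_Q x.

Lemma rootsQ (p : {poly rat}) : exists s : seq K,
  p != 0 -> forall a, root (map_poly (@ratr K) p) a -> a \in s.
Proof.
have [nz|z] := boolP (p != 0); last by exists [::].
have [s Hs] := roots_fin (map_ratr_neq0 nz); by exists s.
Qed.

Lemma enumK : exists e : nat -> K, forall a, exists n, e n = a.
Proof.
pose rs p := proj1_sig (constructive_indefinite_description _ (rootsQ p)).
have rsP p := proj2_sig (constructive_indefinite_description _ (rootsQ p)).
exists (fun n => match @unpickle ({poly rat} * nat)%type n with
  | Some (p, i) => nth 0 (rs p) i | None => 0 end) => a.
have [p nz ra] := algK a.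
have ain : a \in rs p by exact: rsP.
exists (pickle (p, index a (rs p))); rewrite pickleK nth_index //.
Qed.

Lemma endo_surj (s : {rmorphism K -> K}) b : exists a, s a = b.
Proof.
have [p nz rb] := algK b.
set P := map_poly (@ratr K) p.
have [rs Hrs] := roots_fin (map_ratr_neq0 nz).
set l := [seq y <- undup rs | root P y].
have ul : uniq l by rewrite filter_uniq ?undup_uniq.
have bl : b \in l by rewrite mem_filter rb mem_undup Hrs.
have rootS y : root P y -> root P (s y).
  move=> /eqP ry; apply/eqP.
  have -> : P = map_poly s P.
    rewrite /P -map_poly_comp; apply: eq_map_poly => c /=.
    by rewrite fmorph_rat.
  by rewrite horner_map ry rmorph0.
have sub : {subset map s l <= l}.
  move=> z /mapP[y]; rewrite !mem_filter mem_undup => /andP[ry yin] ->.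
  have rsy := rootS y ry.
  by rewrite rsy mem_undup Hrs.
have um : uniq (map s l) by rewrite map_inj_uniq //; exact: fmorph_inj.
have [_ eqs] := uniq_min_size um sub (eq_leq (esym (size_map _ _))).
by move: bl; rewrite -eqs => /mapP[a _ ->]; exists a.
Qed.
End Char0.

Theorem theorem3 (K : fieldType)
  (charK0 : [pchar K] =i pred0)
  (algK : forall x : K, algebraic_over_Q x) :
  forall x : K,
    Ktilde x <-> (forall sigma : {rmorphism K -> K}, bijective sigma -> sigma x = x).
Proof.
move=> x; split.
  move=> [A [xA HA]] sigma _; apply: HA => [_|a b _ _ _|a b _ _ _].
  - exact: rmorph1.
  - exact: rmorphD.
  - exact: rmorphM.
move=> Hfix; apply: NNPP => nK.
have HA : forall A : seq K, x \in A -> exists f, good f A /\ f x <> x.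
  move=> A xA; apply: NNPP => nf; apply: nK; exists A; split=> // f h1 h2 h3.
  apply: NNPP => nfx; apply: nf; exists f; split=> //; exact: And3.
have [e eS] := enumK charK0 algK.
have Hp : forall a : K, exists p : {poly rat}, p != 0 /\ root (map_poly (@ratr K) p) a.
  by move=> a; have [p ? ?] := algK a; exists p.
pose pf a := proj1_sig (constructive_indefinite_description _ (Hp a)).
have pfP a : pf a != 0 /\ root (map_poly (@ratr K) (pf a)) a :=
  proj2_sig (constructive_indefinite_description _ (Hp a)).
have Hr : forall a : K, exists s : seq K, forall b, root (map_poly (@ratr K) (pf a)) b -> b \in s.
  move=> a; exact: roots_fin (map_ratr_neq0 charK0 (pfP a).1).
pose rs a := proj1_sig (constructive_indefinite_description _ (Hr a)).
have rsP a := proj2_sig (constructive_indefinite_description _ (Hr a)).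
pose T i := e i :: tr (e i) (hornt (pf (e i))).
pose B n := x :: flatten [seq T i | i <- iota 0 n.+1].
have TB i n : (i <= n)%N -> {subset T i <= B n}.
  move=> le y yT; rewrite /B inE; apply/orP; right.
  apply/flattenP; exists (T i) => //; apply/mapP; exists i => //.
  by rewrite mem_iota add0n ltnS le.
have HF : forall n, exists f, good f (B n) /\ f x <> x.
  by move=> n; apply: HA; rewrite inE eqxx.
pose Ff n := proj1_sig (constructive_indefinite_description _ (HF n)).
have FfP n : good (Ff n) (B n) /\ Ff n x <> x :=
  proj2_sig (constructive_indefinite_description _ (HF n)).
have HR : forall i n, (i <= n)%N -> (fun n i => Ff n (e i)) n i \in (fun i => rs (e i)) i.
  move=> i n le /=; apply: rsP; apply: root_good (pfP (e i)).2 (FfP n).1 _.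
  by move=> y yt; apply: (TB i n le); rewrite inE yt orbT.
have gK := konig 0 HR.
set gg := g _ _ in gK.
have He : forall a, exists n, e n = a := eS.
pose idx a := proj1_sig (constructive_indefinite_description _ (He a)).
have idxP a : e (idx a) = a := proj2_sig (constructive_indefinite_description _ (He a)).
pose sig a := gg (idx a).
have key : forall L : seq K, exists n, good (Ff n) (B n) /\ Ff n x <> x /\ {subset L <= B n} /\ forall a, a \in L -> Ff n a = sig a.
  move=> L.
  have [N HN] : exists N, forall a, a \in L -> (idx a <= N)%N.
    elim: L => [|a L [N HN]]; first by exists 0%N.
    exists (maxn (idx a) N) => b; rewrite inE => /orP[/eqP->|/HN h].
      exact: leq_maxl.
    exact: leq_trans h (leq_maxr _ _).
  have [n [le Hn]] := gK N N.
  exists n; split; first exact: (FfP n).1.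
  split; first exact: (FfP n).2.
  split.
    move=> a aL; rewrite -(idxP a); apply: (TB (idx a) n).
      exact: leq_trans (HN a aL) le.
    by rewrite inE eqxx.
  by move=> a aL; rewrite -{1}(idxP a) Hn // HN.
have sD a b : sig (a + b) = sig a + sig b.
  have [n [[_ gA _] [_ [sub Hs]]]] := key [:: a; b; a + b].
  rewrite -!Hs ?inE ?eqxx ?orbT //; apply: gA; apply: sub; by rewrite !inE eqxx ?orbT.
have sM a b : sig (a * b) = sig a * sig b.
  have [n [[_ _ gM] [_ [sub Hs]]]] := key [:: a; b; a * b].
  rewrite -!Hs ?inE ?eqxx ?orbT //; apply: gM; apply: sub; by rewrite !inE eqxx ?orbT.
have s1 : sig 1 = 1.
  have [n [[g1 _ _] [_ [sub Hs]]]] := key [:: 1].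
  rewrite -Hs ?inE ?eqxx //; apply: g1; apply: sub; by rewrite !inE eqxx.
have sx : sig x <> x.
  have [n [_ [nx [sub Hs]]]] := key [:: x].
  by rewrite -Hs ?inE ?eqxx.
have s0 : sig 0 = 0.
  by apply: (@addrI _ (sig 0)); rewrite -sD !addr0.
have sAM : nmod_morphism sig by split.
have sMM : monoid_morphism sig by split.
pose sigA := GRing.isNmodMorphism.Build _ _ sig sAM.
pose sigM := GRing.isMonoidMorphism.Build _ _ sig sMM.
pose sigma : {rmorphism K -> K} := HB.pack sig sigA sigM.
apply: sx; apply: (Hfix sigma).
have Hs : forall b, exists a, sigma a = b := endo_surj charK0 algK sigma.
exists (fun b => proj1_sig (constructive_indefinite_description _ (Hs b))).
  move=> a; apply: (@fmorph_inj _ _ sigma).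
  exact: (proj2_sig (constructive_indefinite_description _ (Hs (sigma a)))).
move=> b; exact: (proj2_sig (constructive_indefinite_description _ (Hs b))).
Qed.
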